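(* Let $n\ge 1$ be an integer, $a>0$, and let $a_0,\dots,a_{n-1}:((-a,a)\setminus\{0\})\times\mathbb{K}\to\mathbb{K}$ be arbitrary functions, where $\mathbb{K}=\mathbb{R}$ or $\mathbb{C}$. Let $f\in C^\infty(-a,a)$ be a solution of $$f^{(n)}(x)+a_{n-1}(x,f(x))f^{(n-1)}(x)+\cdots+a_0(x,f(x))f(x)=0,\qquad x\in(-a,a)\setminus\{0\},$$ satisfying $f(0)=f'(0)=\cdots=f^{(n-1)}(0)=0$. If $$|a_k(x,f(x))|=o\!\left(\frac{1}{|x|^{n-k}}\right)\quad\text{as }x\to 0,\qquad k=0,1,\dots,n-1,$$ then there exists $\delta>0$ such that $f\equiv 0$ on $[-\delta,\delta]$.
   Context: The coefficients may be singular at $x=0$; the equation is only required to hold for $x\neq 0$. *)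

(* Defs.v *)
From Stdlib Require Import Reals.
Open Scope R_scope.

(* D is a sequence of derivatives on (-a,a): D (S k) = (D k)' there.
   With D 0 = f this says f is C^infty on (-a,a) with f^(k) = D k. *)
Definition derivs_on (a : R) (D : nat -> R -> R) : Prop :=
  forall (k : nat) (x : R), -a < x < a -> derivable_pt_lim (D k) x (D (S k) x).

Definition CC := (R * R)%type.
Definition Cadd (z w : CC) : CC := (fst z + fst w, snd z + snd w).
Definition Cmul (z w : CC) : CC :=
  (fst z * fst w - snd z * snd w, fst z * snd w + snd z * fst w).
Definition C0 : CC := (0, 0).
Definition Cmod (z : CC) : R := sqrt (fst z ^ 2 + snd z ^ 2).

Definition Cderivs_on (a : R) (D : nat -> R -> CC) : Prop :=
  forall (k : nat) (x : R), -a < x < a ->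
    derivable_pt_lim (fun t => fst (D k t)) x (fst (D (S k) x)) /\
    derivable_pt_lim (fun t => snd (D k t)) x (snd (D (S k) x)).

Fixpoint Csum (m : nat) (F : nat -> CC) : CC :=
  match m with
  | O => C0
  | S m' => Cadd (Csum m' F) (F m')
  end.

(* Main.v *)
Require Import Defs.
From Stdlib Require Import Reals Lra Lia.
Open Scope R_scope.

Lemma fin_eta (n : nat) (P : nat -> R -> Prop) :
  (forall k eta eta', 0 < eta' <= eta -> P k eta -> P k eta') ->
  (forall k, (k < n)%nat -> exists eta, 0 < eta /\ P k eta) ->
  exists eta, 0 < eta /\ forall k, (k < n)%nat -> P k eta.
Proof.
  intros Hm; induction n as [|n IH]; intros H.
  - exists 1; split; [lra|intros; lia].
  - destruct IH as [e1 [He1 H1]]. { intros; apply H; lia. }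
    destruct (H n) as [e2 [He2 H2]]; [lia|].
    exists (Rmin e1 e2); split. { apply Rmin_glb_lt; lra. }
    intros k Hk. destruct (Nat.eq_dec k n) as [->|Hne].
    + apply Hm with e2; auto. split; [apply Rmin_glb_lt; lra| apply Rmin_r].
    + apply Hm with e1; [split; [apply Rmin_glb_lt; lra| apply Rmin_l]|]. apply H1; lia.
Qed.

Lemma mvt_bound (g g' : R -> R) (x B : R) : g 0 = 0 ->
  (forall c, Rabs c <= Rabs x -> derivable_pt_lim g c (g' c) /\ Rabs (g' c) <= B) ->
  Rabs (g x) <= Rabs x * B.
Proof.
  intros H0 H. destruct (total_order_T x 0) as [[Hx|Hx]|Hx].
  - destruct (MVT_cor2 g g' x 0 Hx) as [c [E Hc]].
    + intros c Hc. apply H. split_Rabs; lra.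
    + assert (Hb: Rabs (g' c) <= B) by (apply H; split_Rabs; lra).
      replace (g x) with (- (g' c * (0 - x))) by lra.
      rewrite Rabs_Ropp, Rabs_mult. rewrite Rmult_comm.
      replace (Rabs (0 - x)) with (Rabs x) by (split_Rabs; lra).
      apply Rmult_le_compat_l; [apply Rabs_pos|auto].
  - subst. rewrite H0, Rabs_R0. assert (0 <= B). { destruct (H 0) as [_ Hb]; [lra|]. 
      apply Rle_trans with (Rabs (g' 0)); [apply Rabs_pos|auto]. } nra.
  - destruct (MVT_cor2 g g' 0 x Hx) as [c [E Hc]].
    + intros c Hc. apply H. split_Rabs; lra.
    + assert (Hb: Rabs (g' c) <= B) by (apply H; split_Rabs; lra).
      replace (g x) with (g' c * (x - 0)) by lra.
      rewrite Rabs_mult. rewrite Rmult_comm.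
      replace (Rabs (x - 0)) with (Rabs x) by (split_Rabs; lra).
      apply Rmult_le_compat_l; [apply Rabs_pos|auto].
Qed.

Lemma Cmod_nonneg z : 0 <= Cmod z.
Proof. apply sqrt_pos. Qed.

Lemma Cmod_fst z : Rabs (fst z) <= Cmod z.
Proof.
  unfold Cmod. rewrite <- sqrt_Rsqr_abs. apply sqrt_le_1_alt. unfold Rsqr.
  assert (0 <= snd z ^ 2) by (apply pow2_ge_0). simpl; lra.
Qed.

Lemma Cmod_snd z : Rabs (snd z) <= Cmod z.
Proof.
  unfold Cmod. rewrite <- sqrt_Rsqr_abs. apply sqrt_le_1_alt. unfold Rsqr.
  assert (0 <= fst z ^ 2) by (apply pow2_ge_0). simpl; lra.
Qed.

Lemma Cmod_le_sum z : Cmod z <= Rabs (fst z) + Rabs (snd z).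
Proof.
  unfold Cmod. rewrite <- (sqrt_Rsqr (Rabs (fst z) + Rabs (snd z))).
  2: { generalize (Rabs_pos (fst z)) (Rabs_pos (snd z)); lra. }
  apply sqrt_le_1_alt. unfold Rsqr.
  rewrite <- (pow2_abs (fst z)), <- (pow2_abs (snd z)).
  generalize (Rabs_pos (fst z)) (Rabs_pos (snd z)); intros; nra.
Qed.

Lemma Cmod_mul z w : Cmod (Cmul z w) = Cmod z * Cmod w.
Proof.
  unfold Cmod, Cmul. rewrite <- sqrt_mult_alt.
  - f_equal. simpl. ring.
  - generalize (pow2_ge_0 (fst z)) (pow2_ge_0 (snd z)); lra.
Qed.

Lemma Cmod_eq0 z : Cmod z = 0 -> z = C0.
Proof.
  unfold Cmod. intros H. apply sqrt_eq_0 in H.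
  2: { generalize (pow2_ge_0 (fst z)) (pow2_ge_0 (snd z)); lra. }
  destruct z as [p q]; simpl in *. unfold C0.
  assert (p = 0) by nra. assert (q = 0) by nra. subst; auto.
Qed.

Lemma Csum_fst m F : (1 <= m)%nat ->
  fst (Csum m F) = sum_f_R0 (fun k => fst (F k)) (m - 1).
Proof.
  intros Hm. destruct m as [|m]; [lia|]. replace (S m - 1)%nat with m by lia.
  clear Hm. induction m as [|m IH]; simpl in *.
  - ring.
  - rewrite IH. auto.
Qed.

Lemma Csum_snd m F : (1 <= m)%nat ->
  snd (Csum m F) = sum_f_R0 (fun k => snd (F k)) (m - 1).
Proof.
  intros Hm. destruct m as [|m]; [lia|]. replace (S m - 1)%nat with m by lia.
  clear Hm. induction m as [|m IH]; simpl in *.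
  - ring.
  - rewrite IH. auto.
Qed.

Lemma sum_bound g m c : (forall k, (k <= m)%nat -> Rabs (g k) <= c) ->
  Rabs (sum_f_R0 g m) <= INR (S m) * c.
Proof.
  induction m as [|m IH]; intros H; simpl.
  - rewrite Rmult_1_l. apply H; lia.
  - apply Rle_trans with (Rabs (sum_f_R0 g m) + Rabs (g (S m))); [apply Rabs_triang|].
    assert (A1 := IH (fun k Hk => H k (Nat.le_le_succ_r _ _ Hk))).
    assert (A2 := H (S m) (Nat.le_refl _)).
    destruct m; simpl in *; lra.
Qed.

Lemma ccase (n : nat) (a : R) (A : nat -> R -> CC -> CC) (f : R -> CC)
          (D : nat -> R -> CC) :
     (1 <= n)%nat -> 0 < a ->
     D 0%nat = f -> Cderivs_on a D ->
     (forall x, -a < x < a -> x <> 0 ->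
        Cadd (D n x) (Csum n (fun k => Cmul (A k x (f x)) (D k x))) = C0) ->
     (forall k, (k < n)%nat -> D k 0 = C0) ->
     (forall k, (k < n)%nat ->
        forall eps, 0 < eps -> exists eta, 0 < eta /\
          forall x, 0 < Rabs x < eta -> Rabs x < a ->
            Cmod (A k x (f x)) <= eps / (Rabs x ^ (n - k))) ->
     exists delta, 0 < delta < a /\
       forall x, -delta <= x <= delta -> f x = C0.
Proof.
  intros Hn Ha HD0 Hd Heq Hz Hb.
  assert (Hn0 : 0 < INR n) by (apply lt_0_INR; lia).
  assert (H2n : 0 < 2 ^ n) by (apply pow_lt; lra).
  set (eps := / (4 * INR n * 2 ^ n)).
  assert (Heps : 0 < eps) by (unfold eps; apply Rinv_0_lt_compat; nra).
  destruct (fin_eta n (fun k eta => forall x, 0 < Rabs x < eta -> Rabs x < a ->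
      Cmod (A k x (f x)) <= eps / Rabs x ^ (n - k))) as [eta [Heta HA]].
  { intros k e e' He HP x Hx Hxa. apply HP; auto; lra. }
  { intros k Hk. destruct (Hb k Hk eps Heps) as [e [He HH]]. exists e; auto. }
  set (r := Rmin (eta / 2) (a / 2)).
  assert (Hr : 0 < r /\ r < a /\ r < eta).
  { assert (r <= eta/2) by apply Rmin_l. assert (r <= a/2) by apply Rmin_r.
    split; [apply Rmin_glb_lt; lra | lra]. }
  set (h := fun t => Cmod (D n t)).
  assert (Hcont : forall c, -a < c < a -> continuity_pt h c).
  { intros c Hc. destruct (Hd n c Hc) as [H1 H2].
    assert (C1 := derivable_continuous_pt _ _ (exist _ _ H1)).
    assert (C2 := derivable_continuous_pt _ _ (exist _ _ H2)).
    apply continuity_pt_locally_ext with (a := 1)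
      (f := comp sqrt ((fun t => fst (D n t)) * (fun t => fst (D n t)) +
                       (fun t => snd (D n t)) * (fun t => snd (D n t)))%F).
    - lra.
    - intros y _. unfold comp, h, Cmod, plus_fct, mult_fct. f_equal. ring.
    - apply continuity_pt_comp.
      + apply continuity_pt_plus; apply continuity_pt_mult; assumption.
      + apply continuity_pt_sqrt. unfold plus_fct, mult_fct. nra. }
  destruct (continuity_ab_maj h (-r) r) as [Mx [HM HMx]].
  { lra. }
  { intros; apply Hcont; lra. }
  set (M := h Mx).
  assert (HM0 : 0 <= M) by apply Cmod_nonneg.
  assert (Hbd : forall j, (j <= n)%nat -> forall x, -r <= x <= r ->
            Cmod (D (n - j)%nat x) <= 2 ^ j * Rabs x ^ j * M).
  { induction j as [|j IH]; intros Hj x Hx.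
    - rewrite Nat.sub_0_r. simpl. replace (1 * 1 * M) with M by ring. apply HM; auto.
    - set (k := (n - S j)%nat). assert (Hk : S k = (n - j)%nat) by (unfold k; lia).
      assert (Hkn : (k < n)%nat) by (unfold k; lia).
      apply Rle_trans with (Rabs (fst (D k x)) + Rabs (snd (D k x))); [apply Cmod_le_sum|].
      assert (G : forall c, Rabs c <= Rabs x -> Cmod (D (S k) c) <= 2 ^ j * Rabs x ^ j * M).
      { intros c Hc. rewrite Hk. apply Rle_trans with (2 ^ j * Rabs c ^ j * M).
        - apply IH; [lia|]. split_Rabs; lra.
        - apply Rmult_le_compat_r; auto. apply Rmult_le_compat_l; [apply pow_le; lra|].
          apply pow_incr. split; [apply Rabs_pos|auto]. }
      assert (Hdc : forall c, Rabs c <= Rabs x -> -a < c < a) by (intros c Hc; split_Rabs; lra).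
      assert (E1 : Rabs (fst (D k x)) <= Rabs x * (2 ^ j * Rabs x ^ j * M)).
      { apply (mvt_bound (fun t => fst (D k t)) (fun t => fst (D (S k) t))).
        - rewrite Hz; auto.
        - intros c Hc. split; [apply (Hd k c (Hdc c Hc))|].
          apply Rle_trans with (Cmod (D (S k) c)); [apply Cmod_fst|apply G; auto]. }
      assert (E2 : Rabs (snd (D k x)) <= Rabs x * (2 ^ j * Rabs x ^ j * M)).
      { apply (mvt_bound (fun t => snd (D k t)) (fun t => snd (D (S k) t))).
        - rewrite Hz; auto.
        - intros c Hc. split; [apply (Hd k c (Hdc c Hc))|].
          apply Rle_trans with (Cmod (D (S k) c)); [apply Cmod_snd|apply G; auto]. }
      replace (2 ^ S j * Rabs x ^ S j * M) with
        (Rabs x * (2 ^ j * Rabs x ^ j * M) + Rabs x * (2 ^ j * Rabs x ^ j * M))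
        by (simpl; ring).
      lra. }
  assert (Key : INR n * (eps * 2 ^ n * M) = M / 4).
  { unfold eps. field. split; lra. }
  assert (Hsmall : forall x, -r <= x <= r -> x <> 0 -> h x <= M / 2).
  { intros x Hx Hx0. assert (Hxp : 0 < Rabs x) by (apply Rabs_pos_lt; auto).
    assert (Hxr : Rabs x <= r) by (split_Rabs; lra).
    assert (T : forall k, (k <= n - 1)%nat ->
      Rabs (fst (Cmul (A k x (f x)) (D k x))) <= eps * 2 ^ n * M /\
      Rabs (snd (Cmul (A k x (f x)) (D k x))) <= eps * 2 ^ n * M).
    { intros k Hk.
      assert (HAk := HA k ltac:(lia) x ltac:(lra) ltac:(lra)).
      assert (HDk := Hbd (n - k)%nat ltac:(lia) x Hx).
      replace (n - (n - k))%nat with k in HDk by lia.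
      assert (P : Cmod (Cmul (A k x (f x)) (D k x)) <= eps * 2 ^ n * M).
      { rewrite Cmod_mul.
        apply Rle_trans with (eps / Rabs x ^ (n - k) * (2 ^ (n - k) * Rabs x ^ (n - k) * M)).
        - apply Rmult_le_compat; auto using Cmod_nonneg.
        - assert (Hp : Rabs x ^ (n - k) <> 0) by (apply pow_nonzero; lra).
          replace (eps / Rabs x ^ (n - k) * (2 ^ (n - k) * Rabs x ^ (n - k) * M))
            with (eps * 2 ^ (n - k) * M) by (field; auto).
          apply Rmult_le_compat_r; auto. apply Rmult_le_compat_l; [lra|].
          apply Rle_pow; [lra|lia]. }
      split; (eapply Rle_trans; [|exact P]); [apply Cmod_fst|apply Cmod_snd]. }
    assert (E := Heq x ltac:(lra) Hx0).
    assert (E1 := f_equal fst E). assert (E2 := f_equal snd E).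
    unfold Cadd, C0 in E1, E2. simpl in E1, E2.
    rewrite Csum_fst in E1 by auto. rewrite Csum_snd in E2 by auto.
    assert (S1 := sum_bound (fun k => fst (Cmul (A k x (f x)) (D k x))) (n - 1)
                    (eps * 2 ^ n * M) (fun k Hk => proj1 (T k Hk))).
    assert (S2 := sum_bound (fun k => snd (Cmul (A k x (f x)) (D k x))) (n - 1)
                    (eps * 2 ^ n * M) (fun k Hk => proj2 (T k Hk))).
    replace (S (n - 1)) with n in S1, S2 by lia.
    unfold h. apply Rle_trans with (Rabs (fst (D n x)) + Rabs (snd (D n x))); [apply Cmod_le_sum|].
    replace (fst (D n x)) with (- sum_f_R0 (fun k => fst (Cmul (A k x (f x)) (D k x))) (n - 1)) by lra.
    replace (snd (D n x)) with (- sum_f_R0 (fun k => snd (Cmul (A k x (f x)) (D k x))) (n - 1)) by lra.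
    rewrite !Rabs_Ropp. lra. }
  assert (H0 : h 0 <= M / 2).
  { destruct (Rle_or_lt (h 0) (M / 2)) as [Hle|Hlt]; auto. exfalso.
    assert (Hc := Hcont 0 ltac:(lra)).
    unfold continuity_pt, continue_in, limit1_in, limit_in in Hc.
    destruct (Hc (h 0 - M / 2)) as [del [Hdel Hx]]; [lra|].
    set (x := Rmin (del / 2) r).
    assert (Hx1 : x <= del / 2) by apply Rmin_l. assert (Hx2 : x <= r) by apply Rmin_r.
    assert (Hx3 : 0 < x) by (apply Rmin_glb_lt; lra).
    assert (Q := Hx x). simpl in Q. unfold R_dist in Q.
    assert (Q' : Rabs (h x - h 0) < h 0 - M / 2).
    { apply Q. split; [split; [exact I|lra]|]. split_Rabs; lra. }
    assert (h x <= M / 2) by (apply Hsmall; lra).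
    split_Rabs; lra. }
  assert (HMM : M <= M / 2).
  { assert (HH : h Mx <= M / 2). { destruct (Req_dec Mx 0) as [E|E]; [rewrite E; exact H0| apply Hsmall; [exact HMx|exact E]]. } exact HH. }
  exists r. split; [lra|]. intros x Hx.
  assert (Q := Hbd n (Nat.le_refl _) x Hx).
  rewrite Nat.sub_diag, HD0 in Q.
  apply Cmod_eq0. assert (0 <= Cmod (f x)) by apply Cmod_nonneg.
  assert (M = 0) by lra. rewrite H1, Rmult_0_r in Q. lra.
Qed.
Lemma sum_zero g m : (forall k, (k <= m)%nat -> g k = 0) -> sum_f_R0 g m = 0.
Proof.
  induction m as [|m IH]; intros H; simpl.
  - apply H; lia.
  - rewrite IH, H; [ring|lia|]. intros; apply H; lia.
Qed.

Lemma rcase (n : nat) (a : R) (A : nat -> R -> R -> R) (f : R -> R)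
          (D : nat -> R -> R) :
     (1 <= n)%nat -> 0 < a ->
     D 0%nat = f -> derivs_on a D ->
     (forall x, -a < x < a -> x <> 0 ->
        D n x + sum_f_R0 (fun k => A k x (f x) * D k x) (n - 1) = 0) ->
     (forall k, (k < n)%nat -> D k 0 = 0) ->
     (forall k, (k < n)%nat ->
        forall eps, 0 < eps -> exists eta, 0 < eta /\
          forall x, 0 < Rabs x < eta -> Rabs x < a ->
            Rabs (A k x (f x)) <= eps / (Rabs x ^ (n - k))) ->
     exists delta, 0 < delta < a /\
       forall x, -delta <= x <= delta -> f x = 0.
Proof.
  intros Hn Ha HD0 Hd Heq Hz Hb. subst f.
  assert (Cm : forall p, Cmod (p, 0) = Rabs p).
  { intros p. unfold Cmod. simpl. rewrite <- sqrt_Rsqr_abs. f_equal. unfold Rsqr. ring. }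
  destruct (ccase n a (fun k x z => (A k x (fst z), 0)) (fun x => (D 0%nat x, 0))
              (fun k x => (D k x, 0)) Hn Ha eq_refl) as [delta [Hdl HH]].
  - intros k x Hx. simpl. split; [apply Hd; auto| apply derivable_pt_lim_const].
  - intros x Hx Hx0. rewrite (surjective_pairing (Csum _ _)).
    rewrite Csum_fst, Csum_snd by auto. unfold Cadd, C0; simpl. f_equal.
    + etransitivity; [|exact (Heq x Hx Hx0)]. f_equal. apply sum_eq. intros; unfold Cmul; simpl; ring.
    + rewrite sum_zero; [ring|]. intros; unfold Cmul; simpl; ring.
  - intros k Hk. rewrite Hz; auto.
  - intros k Hk eps Heps. destruct (Hb k Hk eps Heps) as [e [He HE]].
    exists e; split; auto. intros x Hx Hxa. simpl. rewrite Cm. apply HE; auto.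
  - exists delta; split; auto. intros x Hx. exact (f_equal fst (HH x Hx)).
Qed.

Theorem corollary2 :
  (* K = R *)
  (forall (n : nat) (a : R) (A : nat -> R -> R -> R) (f : R -> R)
          (D : nat -> R -> R),
     (1 <= n)%nat -> 0 < a ->
     D 0%nat = f -> derivs_on a D ->
     (forall x, -a < x < a -> x <> 0 ->
        D n x + sum_f_R0 (fun k => A k x (f x) * D k x) (n - 1) = 0) ->
     (forall k, (k < n)%nat -> D k 0 = 0) ->
     (forall k, (k < n)%nat ->
        forall eps, 0 < eps -> exists eta, 0 < eta /\
          forall x, 0 < Rabs x < eta -> Rabs x < a ->
            Rabs (A k x (f x)) <= eps / (Rabs x ^ (n - k))) ->
     exists delta, 0 < delta < a /\
       forall x, -delta <= x <= delta -> f x = 0)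
  /\
  (* K = C *)
  (forall (n : nat) (a : R) (A : nat -> R -> CC -> CC) (f : R -> CC)
          (D : nat -> R -> CC),
     (1 <= n)%nat -> 0 < a ->
     D 0%nat = f -> Cderivs_on a D ->
     (forall x, -a < x < a -> x <> 0 ->
        Cadd (D n x) (Csum n (fun k => Cmul (A k x (f x)) (D k x))) = C0) ->
     (forall k, (k < n)%nat -> D k 0 = C0) ->
     (forall k, (k < n)%nat ->
        forall eps, 0 < eps -> exists eta, 0 < eta /\
          forall x, 0 < Rabs x < eta -> Rabs x < a ->
            Cmod (A k x (f x)) <= eps / (Rabs x ^ (n - k))) ->
     exists delta, 0 < delta < a /\
       forall x, -delta <= x <= delta -> f x = C0).
Proof. split; [exact rcase | exact ccase]. Qed.
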